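(* Let $G=([n],E)$ be a DAG all of whose edges $(u,v)$ satisfy $u<v$ that is a $\delta$-local expander, let $S\subseteq[n]$, and let $x<y$ in $[n]$ both be $\gamma$-good under $S$. If $\delta<\min\{\gamma/2,1/4\}$, then there is a directed path from $x$ to $y$ in $G-S$.
   Context: For $x\in[n]$ and integer $r>0$ let $I_r(x)=\{x-r+1,\ldots,x\}\cap[n]$ and $I^*_r(x)=\{x+1,\ldots,x+r\}\cap[n]$. A DAG $G=([n],E)$ is a $\delta$-local expander if for every $x\in[n]$, every integer $r\ge1$ with $r\le x$ and $r\le n-x$, and every $A\subseteq I_r(x)$, $B\subseteq I^*_r(x)$ with $|A|\ge\delta r$ and $|B|\ge\delta r$, there is an edge $(a,b)\in E$ with $a\in A$, $b\in B$. For $S\subseteq[n]$ and $\gamma>0$, a node $x\in[n]$ is $\gamma$-good under $S$ if for every integer $r>0$, $|I_r(x)\setminus S|\ge\gamma|I_r(x)|$ and $|I^*_r(x)\setminus S|\ge\gamma|I^*_r(x)|$. $G-S$ is $G$ with the nodes of $S$ and incident edges removed. *)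

(* Defs.v *)
From HB Require Import structures.
From mathcomp Require Import all_boot all_order all_algebra.
Set Implicit Arguments. Unset Strict Implicit. Unset Printing Implicit Defensive.
Import Order.TTheory GRing.Theory Num.Theory.

Definition inN (n v : nat) : bool := (1 <= v <= n).

(* I_r(x) = {x-r+1,...,x} ∩ [n]  (x-r+1 <= v  <=>  x < v + r) *)
Definition Iback (n r x : nat) : pred nat :=
  fun v => [&& x < v + r, v <= x & inN n v].

Definition Ifwd (n r x : nat) : pred nat :=
  fun v => [&& x < v, v <= x + r & inN n v].

Definition cardN (n : nat) (P : pred nat) : nat := count P (iota 1 n).

Definition subpred (A B : pred nat) : Prop := forall v, A v -> B v.

Definition local_expander (R : realFieldType) (n : nat) (E : rel nat) (delta : R) : Prop :=
  forall (x r : nat), inN n x -> 1 <= r -> r <= x -> r <= n - x ->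
  forall (A B : pred nat), subpred A (Iback n r x) -> subpred B (Ifwd n r x) ->
    (delta * r%:R <= (cardN n A)%:R)%R -> (delta * r%:R <= (cardN n B)%:R)%R ->
    exists a b, [/\ A a, B b & E a b].

Definition good (R : realFieldType) (n : nat) (S : pred nat) (gamma : R) (x : nat) : Prop :=
  forall r : nat, 0 < r ->
    (gamma * (cardN n (Iback n r x))%:R <= (cardN n (predD (Iback n r x) S))%:R)%R /\
    (gamma * (cardN n (Ifwd n r x))%:R <= (cardN n (predD (Ifwd n r x) S))%:R)%R.

Definition path_avoiding (n : nat) (E : rel nat) (S : pred nat) (x y : nat) : Prop :=
  exists p : seq nat, [/\ path E x p, last x p = y &
     all (fun v => inN n v && ~~ S v) (x :: p)].

(* Main.v *)
Require Import Defs.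
From HB Require Import structures.
From mathcomp Require Import all_boot all_order all_algebra.
From mathcomp Require Import zify lra.
From Stdlib Require Import ClassicalEpsilon.
Import Order.TTheory GRing.Theory Num.Theory.
Local Open Scope ring_scope.

Lemma count_split3 (f g : pred nat) s :
  (count f s <= count g s + count (fun i => f i && ~~ g i) s)%N.
Proof. elim: s => //= a s IH; case: (f a); case: (g a) => /=; lia. Qed.

Lemma count_true (s : seq nat) : count (fun _ => true) s = size s.
Proof. by elim: s => //= _ s ->. Qed.

Lemma cardN_win n (Q P : pred nat) lo m :
  (1 <= lo)%N -> (lo + m <= n.+1)%N ->
  (forall v, Q v = (lo <= v < lo + m)%N && P v) ->
  cardN n Q = count P (iota lo m).
Proof.
move=> h1 h2 hQ; rewrite /cardN (eq_count hQ).
have -> : iota 1 n = iota 1 ((lo - 1) + (m + (n.+1 - lo - m))) by congr iota; lia.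
rewrite !iotaD !count_cat.
have -> : (1 + (lo - 1) = lo)%N by lia.
rewrite (@eq_in_count _ _ pred0 (iota 1 (lo - 1))); last first.
  by move=> v; rewrite mem_iota /= => hv; lia.
rewrite (@eq_in_count _ _ pred0 (iota (lo + m) _)); last first.
  by move=> v; rewrite mem_iota /= => hv; lia.
rewrite (@eq_in_count _ _ P (iota lo m)); last first.
  by move=> v; rewrite mem_iota /= => hv; lia.
by rewrite !count_pred0 addn0.
Qed.

Lemma count_refl (P : pred nat) y a m : (a + m <= y.+1)%N ->
  count (fun i => P (y - i)%N) (iota a m) = count P (iota (y.+1 - a - m) m).
Proof.
elim: m => [|m IH] h //.
rewrite -[m.+1]addn1 iotaD count_cat IH; last lia.
have -> : iota (y.+1 - a - (m + 1)) (m + 1) = (y - (a + m))%N :: iota (y.+1 - a - m) m.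
  rewrite addn1 /=; congr (_ :: iota _ _); lia.
by rewrite /= addn0 addnC.
Qed.

Lemma cardN_fwd n (Q P : pred nat) x a m : (1 <= x)%N -> (x + a + m <= n.+1)%N ->
  (forall v, Q v = (x + a <= v < x + a + m)%N && P v) ->
  cardN n Q = count (fun i => P (x + i)%N) (iota a m).
Proof.
move=> h1 h2 hQ; rewrite (@cardN_win n Q P (x + a) m) //; last lia.
by rewrite iotaDl count_map.
Qed.

Lemma cardN_bwd n (Q P : pred nat) y a m : (a + m <= y)%N -> (y <= n)%N ->
  (forall v, Q v = (y.+1 - a - m <= v < y.+1 - a)%N && P v) ->
  cardN n Q = count (fun i => P (y - i)%N) (iota a m).
Proof.
move=> h1 h2 hQ; rewrite count_refl; last lia.
apply: cardN_win; try lia. move=> v; rewrite hQ; lia.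
Qed.

Lemma emb (P : Prop) : (if excluded_middle_informative P then true else false) <-> P.
Proof. case: excluded_middle_informative => p; split => //. Qed.

Section Paths.
Variables (n : nat) (E : rel nat) (S : pred nat).
Lemma pa_nil x : inN n x -> ~~ S x -> path_avoiding n E S x x.
Proof. move=> h1 h2; exists [::]; split => //=. by rewrite h1 h2. Qed.
Lemma pa_end x v : path_avoiding n E S x v -> inN n v && ~~ S v.
Proof. case=> p [_ <- ha]. exact: (allP ha _ (mem_last x p)). Qed.
Lemma pa_start x v : path_avoiding n E S x v -> inN n x && ~~ S x.
Proof. by case=> p [_ _ /andP[]]. Qed.
Lemma pa_snoc x v w : path_avoiding n E S x v -> E v w -> inN n w -> ~~ S w ->
  path_avoiding n E S x w.
Proof.
case=> p [hp hl ha] hE h1 h2; exists (rcons p w); split.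
- by rewrite rcons_path hp hl hE.
- by rewrite last_rcons.
- by rewrite -rcons_cons all_rcons h1 h2 ha.
Qed.
Lemma pa_cons w v y : E w v -> inN n w -> ~~ S w -> path_avoiding n E S v y ->
  path_avoiding n E S w y.
Proof.
move=> hE h1 h2 [p [hp hl ha]]; exists (v :: p); split => //=.
- by rewrite hE hp.
- by rewrite h1 h2; exact: ha.
Qed.
Lemma pa_cat x v y : path_avoiding n E S x v -> path_avoiding n E S v y ->
  path_avoiding n E S x y.
Proof.
case=> p1 [hp1 hl1 ha1] [p2 [hp2 hl2 ha2]]; exists (p1 ++ p2); split.
- by rewrite cat_path hp1 hl1 hp2.
- by rewrite last_cat hl1.
- by rewrite -cat_cons all_cat ha1 /=; case/andP: ha2.
Qed.
End Paths.

Lemma core (R : realFieldType) (delta gamma : R) (f g : pred nat) (K : nat) :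
  0 <= delta -> 2 * delta <= gamma -> 2 * delta <= 1 -> g 0 -> (forall i, g i -> f i) ->
  (forall j, (j <= K.+1)%N -> gamma * j%:R <= (count f (iota 0 j))%:R) ->
  (forall m, (0 < m)%N -> (m + m <= K.+1)%N -> delta * m%:R <= (count g (iota 0 m))%:R ->
     (count (fun i => f i && ~~ g i) (iota m m))%:R < delta * m%:R) ->
  forall k, (k < K)%N -> (count (fun i => f i && ~~ g i) (iota 0 k.+1))%:R <= delta * k%:R.
Proof.
move=> d0 hdg hd1 g0 gf Hgood Hexp.
set h := (fun i => f i && ~~ g i).
have sp : forall s, (count f s)%:R <= (count g s)%:R + (count h s)%:R :> R.
  by move=> s; rewrite -natrD ler_nat count_split3.
have dens : forall m, (m < K)%N -> (count h (iota 0 m.+1))%:R <= delta * m%:R ->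
    delta * m.+1%:R <= (count g (iota 0 m.+1))%:R.
  move=> m hm ih.
  have h1 := Hgood m.+1 (ltnW hm).
  have h2 := sp (iota 0 m.+1).
  have h3 : 2 * delta * m.+1%:R <= gamma * m.+1%:R by rewrite ler_wpM2r // ler0n.
  have e1 : (m.+1%:R : R) = m%:R + 1 by rewrite -addn1 natrD.
  rewrite e1 in h1 h3 *; lra.
elim/ltn_ind => k IH hk.
case: k IH hk => [|k] IH hk.
  by rewrite /h /= g0 andbF /= mulr0.
have [m [hm|hm]] : exists m, (k.+2 = m + m \/ k.+2 = (m + m).+1)%N.
  by exists (k.+2 %/ 2)%N; lia.
- have [m' hm'] : exists m', m = m'.+1 by exists m.-1; lia.
  subst m.
  have ih := IH m' ltac:(lia) ltac:(lia).
  have hg := dens m' ltac:(lia) ih.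
  have hN := Hexp m'.+1 isT ltac:(lia) hg.
  rewrite hm iotaD count_cat natrD.
  have -> : (k.+1 = (m' + m').+1)%N by lia.
  have e1 : (m'.+1%:R : R) = m'%:R + 1 by rewrite -addn1 natrD.
  have e2 : ((m' + m').+1%:R : R) = m'%:R + m'%:R + 1 by rewrite -addn1 !natrD.
  rewrite add0n e2; rewrite e1 in hN; lra.
- have ih := IH m ltac:(lia) ltac:(lia).
  have hg := dens m ltac:(lia) ih.
  have hN := Hexp m.+1 isT ltac:(lia) hg.
  have -> : (k.+2 = m.+1 + m)%N by lia.
  rewrite iotaD count_cat add0n.
  have hN' : (count h (iota m.+1 m) <= count h (iota m.+1 m.+1))%N.
    by rewrite -(addn1 m) iotaD count_cat leq_addr.
  have hN'' : (count h (iota m.+1 m))%:R <= (count h (iota m.+1 m.+1))%:R :> R.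
    by rewrite ler_nat.
  move: hN'' hN ih; set P := count h (iota 0 m.+1); set N := count h (iota m.+1 m.+1).
  set N' := count h (iota m.+1 m) => hN'' hN ih.
  have -> : (k.+1 = m + m)%N by lia.
  have e1 : (m.+1%:R : R) = m%:R + 1 by rewrite -addn1 natrD.
  have e2 : ((m + m)%:R : R) = m%:R + m%:R by rewrite natrD.
  rewrite e1 in hN; rewrite e2 (natrD _ P N').
  case: (leqP N P) => hNP.
    have : (N%:R : R) <= P%:R by rewrite ler_nat.
    lra.
  have : ((P.+1)%:R : R) <= N%:R by rewrite ler_nat.
  rewrite -addn1 natrD; lra.
Qed.

Lemma densA (R : realFieldType) (delta gamma : R) (cf cg ch k : nat) :
  0 <= delta -> 2 * delta <= gamma -> (cf <= cg + ch)%N ->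
  gamma * k.+1%:R <= cf%:R -> ch%:R <= delta * k%:R -> delta * k.+1%:R <= cg%:R.
Proof.
move=> d0 hdg hc h1 h2.
have h3 : (cf%:R : R) <= cg%:R + ch%:R by rewrite -natrD ler_nat.
have h4 : 2 * delta * k.+1%:R <= gamma * k.+1%:R by rewrite ler_wpM2r // ler0n.
have e1 : (k.+1%:R : R) = k%:R + 1 by rewrite -addn1 natrD.
rewrite e1 in h1 h4 *; lra.
Qed.

Lemma densB (R : realFieldType) (delta gamma : R) (cf cg ch k : nat) :
  0 <= delta -> 2 * delta <= gamma -> (cf <= cg + ch)%N ->
  gamma * k%:R <= cf%:R -> ch%:R <= delta * k%:R -> delta * k%:R <= cg%:R.
Proof.
move=> d0 hdg hc h1 h2.
have h3 : (cf%:R : R) <= cg%:R + ch%:R by rewrite -natrD ler_nat.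
have h4 : 2 * delta * k%:R <= gamma * k%:R by rewrite ler_wpM2r // ler0n.
lra.
Qed.

Ltac nlia :=
  repeat match goal with
  | H : is_true (@Order.le _ _ _ _) |- _ => clear H
  | H : is_true (@Order.lt _ _ _ _) |- _ => clear H
  | H : context [cardN _ _] |- _ => clear H
  end; lia.

Theorem mainTheorem11 (R : realFieldType) (n : nat) (E : rel nat) (S : pred nat)
  (delta gamma : R) (x y : nat) :
  (forall u v, E u v -> [/\ inN n u, inN n v & (u < v)%N]) ->
  local_expander n E delta ->
  (forall v, S v -> inN n v) ->
  0 < gamma ->
  inN n x -> inN n y -> (x < y)%N ->
  good n S gamma x -> good n S gamma y ->
  delta < Num.min (gamma / 2) (1 / 4) ->
  path_avoiding n E S x y.
Proof.
move=> HE Hexp HS Hg0 hx hy hxy gx gy hd.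
move: hd; rewrite lt_min => /andP[hd1 hd2].
have hdg : 2 * delta <= gamma by lra.
have hd12 : 2 * delta <= 1 by lra.
have hx' : (1 <= x <= n)%N := hx.
have hy' : (1 <= y <= n)%N := hy.
have d0 : 0 <= delta.
  rewrite leNgt; apply/negP => dn.
  have c0 : cardN n pred0 = 0%N by rewrite /cardN count_pred0.
  have hc : delta * 1%:R <= (cardN n pred0)%:R by rewrite c0 mulr1; lra.
  have s0 : forall P : pred nat, subpred pred0 P by move=> P v.
  by have [a [b []]] := Hexp x 1%N hx isT ltac:(nlia) ltac:(nlia) pred0 pred0 (s0 _) (s0 _) hc hc.
have gfwd : forall j, (0 < j)%N -> (x + j <= n)%N ->
    gamma * j%:R <= (count (fun i => ~~ S (x + i)%N) (iota 1 j))%:R.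
  move=> j j0 hj; have [_ h] := gx j j0.
  rewrite (@cardN_fwd n _ (fun _ => true) x 1 j) in h; try nlia; last first.
    by move=> v; rewrite /Ifwd /inN; nlia.
  rewrite (@cardN_fwd n _ (fun v => ~~ S v) x 1 j) in h; try nlia; last first.
    by move=> v; rewrite /Ifwd /inN /=; nlia.
  by rewrite count_true size_iota in h.
have gbwd' : forall z, good n S gamma z -> (z <= n)%N -> forall j, (0 < j)%N -> (j <= z)%N ->
    gamma * j%:R <= (count (fun i => ~~ S (z - i)%N) (iota 0 j))%:R.
  move=> y0 gy0 hy0 j j0 hj; have [h _] := gy0 j j0.
  rewrite (@cardN_bwd n _ (fun _ => true) y0 0 j) in h; try nlia; last first.
    by move=> v; rewrite /Iback /inN; nlia.
  rewrite (@cardN_bwd n _ (fun v => ~~ S v) y0 0 j) in h; try nlia; last first.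
    by move=> v; rewrite /Iback /inN /=; nlia.
  by rewrite count_true size_iota in h.
have gbwd := gbwd' y gy ltac:(nlia).
have hxS : ~~ S x.
  have := gbwd' x gx ltac:(nlia) 1%N isT ltac:(nlia).
  rewrite /= subn0; case: (S x) => //= h; lra.
have hyS : ~~ S y.
  have := gbwd 1%N isT ltac:(nlia).
  rewrite /= subn0; case: (S y) => //= h; lra.
have g1 : gamma <= 1.
  have := gfwd 1%N isT ltac:(nlia).
  have : ((count (fun i => ~~ S (x + i)%N) (iota 1 1))%:R <= 1 :> R).
    by rewrite lern1 -(size_iota 1 1) count_size.
  lra.
pose Rf := fun v => if excluded_middle_informative (path_avoiding n E S x v) then true else false.
pose Bf := fun v => if excluded_middle_informative (path_avoiding n E S v y) then true else false.
have RfP : forall v, Rf v <-> path_avoiding n E S x v by move=> v; exact: emb.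
have BfP : forall v, Bf v <-> path_avoiding n E S v y by move=> v; exact: emb.
have hgF : forall j, (j <= (y - x).+1)%N ->
    gamma * j%:R <= (count (fun i => ~~ S (x + i)%N) (iota 0 j))%:R.
  move=> j hj; case: j hj => [|j] hj; first by rewrite mulr0.
  have e : count (fun i => ~~ S (x + i)%N) (iota 0 j.+1)
      = (1 + count (fun i => ~~ S (x + i)%N) (iota 1 j))%N by rewrite /= addn0 hxS.
  have e1 : (j.+1%:R : R) = 1 + j%:R by rewrite -add1n natrD.
  rewrite e natrD e1.
  case: j {e e1} hj => [|j] hj.
    by rewrite /= !addr0 mulr1.
  have := gfwd j.+1 isT ltac:(nlia); lra.
have CF : forall k, (k < y - x)%N ->
   (count (fun i => ~~ S (x + i)%N && ~~ Rf (x + i)%N) (iota 0 k.+1))%:R <= delta * k%:R.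
  apply: (@core R delta gamma (fun i => ~~ S (x + i)%N) (fun i => Rf (x + i)%N) (y - x) d0 hdg hd12).
  - by apply/RfP; rewrite addn0; exact: pa_nil.
  - by move=> i /RfP /pa_end /andP[].
  - exact: hgF.
  - move=> m m0 hm hA; rewrite ltNge; apply/negP => hB.
    pose z := (x + m - 1)%N.
    have cA : delta * m%:R <= (cardN n (fun v => Iback n m z v && Rf v))%:R.
      rewrite (@cardN_fwd n _ Rf x 0 m); [exact: hA| nlia | rewrite /z; nlia |].
      by move=> v; rewrite /Iback /inN /z; nlia.
    have cB : delta * m%:R <= (cardN n (fun v => Ifwd n m z v && (~~ S v && ~~ Rf v)))%:R.
      rewrite (@cardN_fwd n _ (fun v => ~~ S v && ~~ Rf v) x m m); [exact: hB| nlia | rewrite /z; nlia |].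
      by move=> v; rewrite /Ifwd /inN /z; nlia.
    have := Hexp z m ltac:(rewrite /inN /z; nlia) m0 ltac:(rewrite /z; nlia) ltac:(rewrite /z; nlia)
      (fun v => Iback n m z v && Rf v) (fun v => Ifwd n m z v && (~~ S v && ~~ Rf v))
      (fun v hv => proj1 (andP hv)) (fun v hv => proj1 (andP hv)) cA cB.
    case=> a [b [/andP[_ ha] /andP[_ /andP[hbS hbR]] hab]].
    have [_ hb _] := HE a b hab.
    move/negP: hbR; apply; apply/RfP; apply: (@pa_snoc n E S x a b _ hab hb hbS); exact/RfP.
have CB : forall k, (k < y - x)%N ->
   (count (fun i => ~~ S (y - i)%N && ~~ Bf (y - i)%N) (iota 0 k.+1))%:R <= delta * k%:R.
  apply: (@core R delta gamma (fun i => ~~ S (y - i)%N) (fun i => Bf (y - i)%N) (y - x) d0 hdg hd12).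
  - by apply/BfP; rewrite subn0; exact: pa_nil.
  - by move=> i /BfP /pa_start /andP[].
  - move=> j hj; case: j hj => [|j] hj; first by rewrite mulr0.
    exact: (gbwd j.+1 isT ltac:(nlia)).
  - move=> m m0 hm hA; rewrite ltNge; apply/negP => hB.
    pose z := (y - m)%N.
    have cB : delta * m%:R <= (cardN n (fun v => Ifwd n m z v && Bf v))%:R.
      rewrite (@cardN_bwd n _ Bf y 0 m); [exact: hA| nlia | nlia |].
      by move=> v; rewrite /Ifwd /inN /z; nlia.
    have cA : delta * m%:R <= (cardN n (fun v => Iback n m z v && (~~ S v && ~~ Bf v)))%:R.
      rewrite (@cardN_bwd n _ (fun v => ~~ S v && ~~ Bf v) y m m); [exact: hB| nlia | nlia |].
      by move=> v; rewrite /Iback /inN /z; nlia.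
    have := Hexp z m ltac:(rewrite /inN /z; nlia) m0 ltac:(rewrite /z; nlia) ltac:(rewrite /z; nlia)
      (fun v => Iback n m z v && (~~ S v && ~~ Bf v)) (fun v => Ifwd n m z v && Bf v)
      (fun v hv => proj1 (andP hv)) (fun v hv => proj1 (andP hv)) cA cB.
    case=> a [b [/andP[_ /andP[haS haB]] /andP[_ hb] hab]].
    have [ha _ _] := HE a b hab.
    move/negP: haB; apply; apply/BfP; apply: (@pa_cons n E S a b y hab ha haS); exact/BfP.
have [r [e [r0 e1 hre]]] : exists r e, [/\ (0 < r)%N, (e <= 1)%N & (e + r + r = (y - x).+1)%N].
  by exists ((y - x).+1 %/ 2)%N, ((y - x).+1 %% 2)%N; split; nlia.
have [k hk] : exists k, r = k.+1 by exists r.-1; nlia.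
pose z := (y - r)%N.
have cB : delta * r%:R <= (cardN n (fun v => Ifwd n r z v && Bf v))%:R.
  rewrite (@cardN_bwd n _ Bf y 0 r); [| nlia | nlia |]; last first.
    by move=> v; rewrite /Ifwd /inN /z; nlia.
  rewrite hk; apply: (@densA _ _ _ _ _ _ _ d0 hdg (count_split3 (fun i => ~~ S (y - i)%N) _ _)).
    exact: (gbwd k.+1 isT ltac:(nlia)).
  exact: (CB k ltac:(nlia)).
have cA : delta * r%:R <= (cardN n (fun v => Iback n r z v && Rf v))%:R.
  rewrite (@cardN_fwd n _ Rf x e r); [| nlia | nlia |]; last first.
    by move=> v; rewrite /Iback /inN /z; nlia.
  have [e0|e1'] : e = 0%N \/ e = 1%N by nlia.
  - subst e; rewrite hk; apply: (@densA _ _ _ _ _ _ _ d0 hdg (count_split3 (fun i => ~~ S (x + i)%N) _ _)).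
      exact: (hgF k.+1 ltac:(nlia)).
    exact: (CF k ltac:(nlia)).
  - subst e; apply: (@densB _ _ _ _ _ _ _ d0 hdg (count_split3 (fun i => ~~ S (x + i)%N) _ _)).
      exact: (gfwd r r0 ltac:(nlia)).
    have := CF r ltac:(nlia).
    have Rx : Rf (x + 0)%N by apply/RfP; rewrite addn0; exact: pa_nil.
    have ec : count (fun i => ~~ S (x + i)%N && ~~ Rf (x + i)%N) (iota 0 r.+1) =
      ((~~ S (x + 0)%N && ~~ Rf (x + 0)%N) + count (fun i => ~~ S (x + i)%N && ~~ Rf (x + i)%N) (iota 1 r))%N by [].
    by rewrite ec Rx andbF add0n.
have := Hexp z r ltac:(rewrite /inN /z; nlia) r0 ltac:(rewrite /z; nlia) ltac:(rewrite /z; nlia)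
  (fun v => Iback n r z v && Rf v) (fun v => Ifwd n r z v && Bf v)
  (fun v hv => proj1 (andP hv)) (fun v hv => proj1 (andP hv)) cA cB.
case=> a [b [/andP[_ ha] /andP[_ hb] hab]].
move/RfP: ha => ha; move/BfP: hb => hb.
have [ha' _ _] := HE a b hab.
have /andP[_ haS] := @pa_end n E S x a ha.
exact: (@pa_cat n E S x a y ha (@pa_cons n E S a b y hab ha' haS hb)).
Qed.
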